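(* Let $\mathcal{P}_1,\dots,\mathcal{P}_k$ be finite posets and $\mathbf{T}\in\mathbb{R}^{\mathcal{P}_1\times\cdots\times\mathcal{P}_k}$. If $\mathbf{T}$ has an optimal unconstrained rank-$r$ approximation $\mathbf{T}^{(r)}$, i.e. a minimizer of $\Vert\mathbf{T}-\boldsymbol\theta\Vert_F^2$ over all tensors $\boldsymbol\theta$ of (real CP) rank at most $r$, and $\mathbf{T}^{(r)}\in\mathcal{N}_{\le r}$, then $\mathbf{T}^{(r)}$ is a minimizer of $\Vert\mathbf{T}-\boldsymbol\theta\Vert_F^2$ over $\boldsymbol\theta\in\mathcal{N}_{\le r}$. For matrices ($k=2$), if the best rank-at-most-two approximation $\mathbf{T}^{(2)}$ satisfies $\mathbf{T}^{(2)}\in\mathcal{N}_{<\infty}$, then $\mathbf{T}^{(2)}$ is a minimizer of $\Vert\mathbf{T}-\boldsymbol\theta\Vert_F^2$ over $\boldsymbol\theta\in\mathcal{N}_{\le 2}$.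
   Context: For a finite poset $\mathcal{Q}$, the order cone $\mathcal{C}(\mathcal{Q})$ is the set of $\mathbf{f}\in\mathbb{R}^{\mathcal{Q}}$ with $f_x\ge0$ for all $x$ and $f_x\le f_y$ whenever $x\preceq y$. $\mathcal{N}_{\le r}$ is the set of tensors of the form $\sum_{i=1}^r\otimes_{j=1}^k\mathbf{v}^{(ij)}$ with $\mathbf{v}^{(ij)}\in\mathcal{C}(\mathcal{P}_j)$, and $\mathcal{N}_{<\infty}=\bigcup_r\mathcal{N}_{\le r}$. The real (CP) rank of a tensor is the minimal number of real rank-one tensors $\otimes_j\mathbf{v}^{(j)}$ summing to it. $\Vert\cdot\Vert_F$ is the Frobenius norm. *)

(* Defs.v *)
From HB Require Import structures.
From mathcomp Require Import all_boot all_order all_algebra.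
From mathcomp Require Import reals.
Set Implicit Arguments. Unset Strict Implicit. Unset Printing Implicit Defensive.
Import Order.TTheory GRing.Theory Num.Theory.
Local Open Scope ring_scope.

Section Tensors.
Variable R : realType.
Variable k : nat.
Variable d : 'I_k -> Order.disp_t.
Variable P : forall j : 'I_k, finPOrderType (d j).

Definition tidx := {dffun forall j : 'I_k, P j}.
Definition tensor := tidx -> R.

Definition order_cone (j : 'I_k) (f : P j -> R) : Prop :=
  (forall x, 0 <= f x) /\ (forall x y : P j, (x <= y)%O -> f x <= f y).

Definition outer (v : forall j : 'I_k, P j -> R) : tensor :=
  fun i => \prod_(j < k) v j (i j).

Definition rank_le (r : nat) (th : tensor) : Prop :=
  exists s : nat, (s <= r)%N /\
  exists v : 'I_s -> forall j : 'I_k, P j -> R,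
    forall i, th i = \sum_(l < s) outer (v l) i.

Definition N_le (r : nat) (th : tensor) : Prop :=
  exists v : 'I_r -> forall j : 'I_k, P j -> R,
    (forall l j, order_cone (v l j)) /\
    forall i, th i = \sum_(l < r) outer (v l) i.

Definition N_fin (th : tensor) : Prop := exists r, N_le r th.

Definition frob2 (T th : tensor) : R := \sum_(i : tidx) (T i - th i) ^+ 2.

Definition minimizer_over (S : tensor -> Prop) (T th0 : tensor) : Prop :=
  S th0 /\ forall th, S th -> frob2 T th0 <= frob2 T th.

End Tensors.

(* Main.v *)
Require Import Defs.
From mathcomp Require Import all_boot all_order all_algebra.
From mathcomp Require Import reals.
From mathcomp Require Import ring lra.
From Stdlib Require Import Classical FunctionalExtensionality.
Set Implicit Arguments. Unset Strict Implicit. Unset Printing Implicit Defensive.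
Import Order.TTheory GRing.Theory Num.Theory.
Local Open Scope ring_scope.

Definition cone (R : realFieldType) dx (X : finPOrderType dx) (f : X -> R) :=
  (forall x, 0 <= f x) /\ (forall x y : X, (x <= y)%O -> f x <= f y).

Lemma cone0 (R : realFieldType) dx (X : finPOrderType dx) : cone (fun _ : X => 0 : R).
Proof. by split=> // *; rewrite lexx. Qed.

Lemma rank1 (R : realFieldType) dx (X : finPOrderType dx) dy (Y : finPOrderType dy)
  (M : X -> Y -> R) (a : X -> R) (b : Y -> R)
  (HM : forall x y, M x y = a x * b y)
  (H1 : forall y, cone (fun x => M x y))
  (H2 : forall y y', (y <= y')%O -> cone (fun x => M x y' - M x y)) :
  exists (u : X -> R) (z : Y -> R), cone u /\ cone z /\ forall x y, M x y = u x * z y.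
Proof.
case: (boolP [exists x, exists y, M x y != 0]) => [/existsP[x0 /existsP[y0 nz]]|/existsPn H].
  have by0 : b y0 != 0 by move: nz; rewrite HM; apply: contraNneq => ->; rewrite mulr0.
  have ux0 : 0 < M x0 y0 by rewrite lt_def nz (H1 y0).1.
  exists (fun x => M x y0), (fun y => b y / b y0); split; first exact: H1.
  have E x y : M x y = M x y0 * (b y / b y0) by rewrite !HM; field.
  split; last exact: E.
  split.
    move=> y; have := (H1 y).1 x0; rewrite E.
    by rewrite pmulr_rge0.
  move=> y y' le; have := (H2 _ _ le).1 x0; rewrite (E x0 y') (E x0 y) -mulrBr.
  by rewrite pmulr_rge0 // subr_ge0.
exists (fun _ => 0), (fun _ => 0); split; first exact: cone0.
split; first exact: cone0.
move=> x y; have := H x; move/existsPn => /(_ y); rewrite negbK => /eqP->.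
by rewrite mulr0.
Qed.

Lemma argmin_ex (R : realDomainType) (I : finType) (A : pred I) (F : I -> R) i0 :
  A i0 -> exists2 i, A i & forall j, A j -> F i <= F j.
Proof.
move=> Ai0; case: (arg_minP F Ai0) => i Ai H; exists i => // j Aj; exact: H.
Qed.

Lemma argmax_ex (R : realDomainType) (I : finType) (A : pred I) (F : I -> R) i0 :
  A i0 -> exists2 i, A i & forall j, A j -> F j <= F i.
Proof.
move=> Ai0; case: (arg_maxP F Ai0) => i Ai H; exists i => // j Aj; exact: H.
Qed.

Lemma two_d (R : realFieldType) (I : finType) (g1 g2 : I -> R) (k1 k2 : R)
 (Hpos : forall i, (g1 i != 0) || (g2 i != 0) -> 0 < k1 * g1 i + k2 * g2 i) :
 exists e1 e2 f1 f2 l1 l2 m1 m2 : R,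
  ((e1 = 0 /\ e2 = 0) \/ exists i, e1 = g1 i /\ e2 = g2 i) /\
  ((f1 = 0 /\ f2 = 0) \/ exists i, f1 = g1 i /\ f2 = g2 i) /\
  forall i, 0 <= l1 * g1 i + l2 * g2 i /\ 0 <= m1 * g1 i + m2 * g2 i /\
     g1 i = (l1 * g1 i + l2 * g2 i) * e1 + (m1 * g1 i + m2 * g2 i) * f1 /\
     g2 i = (l1 * g1 i + l2 * g2 i) * e2 + (m1 * g1 i + m2 * g2 i) * f2.
Proof.
pose A := fun i => (g1 i != 0) || (g2 i != 0).
have [Hall|[i0 Ai0]] : (forall i, ~~ A i) \/ exists i, A i.
  case: (boolP [exists i, A i]) => [/existsP|/existsPn]; by [right|left].
  exists 0, 0, 0, 0, 0, 0, 0, 0; split; first by left.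
  split; first by left.
  move=> i; move: (Hall i); rewrite /A negb_or !negbK => /andP[/eqP-> /eqP->].
  by rewrite !mul0r !addr0 ?mul0r ?addr0 lexx; do !split.
pose ps i := k1 * g1 i + k2 * g2 i.
pose ch i := - k2 * g1 i + k1 * g2 i.
pose tau i := ch i / ps i.
have psge0 i : 0 <= ps i.
  case: (boolP (A i)) => [/Hpos/ltW//|]; rewrite /A negb_or !negbK.
  by rewrite /ps; case/andP => /eqP-> /eqP->; rewrite !mulr0 addr0.
have K0 : 0 < k1 ^+ 2 + k2 ^+ 2.
  have := Hpos _ Ai0; rewrite lt_def => /andP[ne _].
  have : (k1 != 0) || (k2 != 0).
    apply: contraNT ne; rewrite negb_or !negbK => /andP[/eqP-> /eqP->].
    by rewrite !mul0r addr0.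
  have h1 := sqr_ge0 k1; have h2 := sqr_ge0 k2.
  case/orP => nz; [have h : 0 < k1 ^+ 2 | have h : 0 < k2 ^+ 2];
    rewrite ?lt_def ?sqrf_eq0 ?nz ?sqr_ge0 //; lra.
have detid u1 u2 v1 v2 : (u1 * v2 - u2 * v1) * (k1 ^+ 2 + k2 ^+ 2) =
   (k1 * u1 + k2 * u2) * (- k2 * v1 + k1 * v2) - (- k2 * u1 + k1 * u2) * (k1 * v1 + k2 * v2).
  by ring.
have [ie Aie Hie] := argmin_ex tau Ai0.
have [jf Ajf Hjf] := argmax_ex tau Ai0.
have pse : 0 < ps ie by exact: Hpos.
have psf : 0 < ps jf by exact: Hpos.
have detsign i j : A i -> A j ->
   (g1 i * g2 j - g2 i * g1 j) * (k1 ^+ 2 + k2 ^+ 2) = ps i * ps j * (tau j - tau i).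
  move=> Ai Aj; rewrite detid /tau.
  have pi0 : ps i != 0 by rewrite gt_eqF // Hpos.
  have pj0 : ps j != 0 by rewrite gt_eqF // Hpos.
  rewrite /ps /ch in pi0 pj0 *; field; by apply/andP.
have key : forall x y : R, x - y = 0 -> x = y.
  by move=> x y /eqP; rewrite subr_eq0 => /eqP.
have notA i : ~~ A i -> g1 i = 0 /\ g2 i = 0.
  by rewrite /A negb_or !negbK => /andP[/eqP-> /eqP->].
have Kne : k1 ^+ 2 + k2 ^+ 2 != 0 by rewrite gt_eqF.
have [lt_ef|eq_ef] : tau ie < tau jf \/ tau ie = tau jf.
  by have := Hjf _ Aie; rewrite le_eqVlt => /orP[/eqP->|]; [right|left].
- pose D := g1 ie * g2 jf - g2 ie * g1 jf.
  have DK : D * (k1 ^+ 2 + k2 ^+ 2) > 0.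
    by rewrite /D detsign // mulr_gt0 ?mulr_gt0 // subr_gt0.
  have Dp : 0 < D.
    by move: DK; rewrite pmulr_lgt0.
  have Dne : D != 0 by rewrite gt_eqF.
  exists (g1 ie), (g2 ie), (g1 jf), (g2 jf), (g2 jf / D), (- g1 jf / D),
    (- g2 ie / D), (g1 ie / D).
  split; first by right; exists ie.
  split; first by right; exists jf.
  move=> i; case: (boolP (A i)) => Ai; last first.
    have [-> ->] := notA i Ai; rewrite !mulr0 !addr0 lexx.
    by rewrite !mul0r addr0.
  have l1 : 0 <= g2 jf / D * g1 i + - g1 jf / D * g2 i.
    have -> : g2 jf / D * g1 i + - g1 jf / D * g2 i =
       (g1 i * g2 jf - g2 i * g1 jf) / D by field.
    apply: divr_ge0; last exact: ltW.
    have : 0 <= (g1 i * g2 jf - g2 i * g1 jf) * (k1 ^+ 2 + k2 ^+ 2).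
      by rewrite detsign // mulr_ge0 ?mulr_ge0 ?psge0 // subr_ge0 Hjf.
    by rewrite pmulr_lge0.
  have l2 : 0 <= - g2 ie / D * g1 i + g1 ie / D * g2 i.
    have -> : - g2 ie / D * g1 i + g1 ie / D * g2 i =
       (g1 ie * g2 i - g2 ie * g1 i) / D by field.
    apply: divr_ge0; last exact: ltW.
    have : 0 <= (g1 ie * g2 i - g2 ie * g1 i) * (k1 ^+ 2 + k2 ^+ 2).
      by rewrite detsign // mulr_ge0 ?mulr_ge0 ?psge0 // subr_ge0 Hie.
    by rewrite pmulr_lge0.
  do !split => //; rewrite /D in Dne *; field; exact: Dne.
- have pne : ps ie != 0 by rewrite gt_eqF.
  exists (g1 ie), (g2 ie), 0, 0, (k1 / ps ie), (k2 / ps ie), 0, 0.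
  split; first by right; exists ie.
  split; first by left.
  move=> i; case: (boolP (A i)) => Ai; last first.
    have [-> ->] := notA i Ai; rewrite !mulr0 !addr0 ?mul0r ?addr0 lexx; do !split.
  have lam : k1 / ps ie * g1 i + k2 / ps ie * g2 i = ps i / ps ie.
    by rewrite /ps; field; rewrite /ps in pne.
  have taui : tau i = tau ie.
    by apply/eqP; rewrite eq_le Hie // eq_ef Hjf.
  have Ed : g1 ie * g2 i - g2 ie * g1 i = 0.
    have := detsign _ _ Aie Ai; rewrite taui subrr mulr0 => /eqP.
    by rewrite mulf_eq0 (negbTE Kne) orbF => /eqP.
  rewrite lam !mul0r addr0 mulr0 !addr0.
  split; first by apply: divr_ge0; [exact: psge0 | exact: ltW].
  split; first exact: lexx.
  split; apply/esym/key.
    rewrite (_ : _ - _ = k2 * (g1 ie * g2 i - g2 ie * g1 i) / ps ie).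
      by rewrite Ed mulr0 mul0r.
    by rewrite /ps; field; rewrite /ps in pne.
  rewrite (_ : _ - _ = - k1 * (g1 ie * g2 i - g2 ie * g1 i) / ps ie).
    by rewrite Ed mulr0 mul0r.
  by rewrite /ps; field; rewrite /ps in pne.
Qed.

Lemma core2 (R : realFieldType) dx (X : finPOrderType dx) dy (Y : finPOrderType dy)
  (a1 a2 : X -> R) (b1 b2 : Y -> R)
  (H1 : forall y, cone (fun x => a1 x * b1 y + a2 x * b2 y))
  (H2 : forall y y', (y <= y')%O ->
     cone (fun x => (a1 x * b1 y' + a2 x * b2 y') - (a1 x * b1 y + a2 x * b2 y))) :
  exists (u1 u2 : X -> R) (z1 z2 : Y -> R),
    [/\ cone u1, cone u2, cone z1, cone z2 &
     forall x y, a1 x * b1 y + a2 x * b2 y = u1 x * z1 y + u2 x * z2 y].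
Proof.
pose M x y := a1 x * b1 y + a2 x * b2 y.
case: (classic (forall p q : R, (forall x, p * a1 x + q * a2 x = 0) -> p = 0 /\ q = 0))
  => [indep|dep]; last first.
  have [p [q [Hpq nz]]] : exists p q : R, (forall x, p * a1 x + q * a2 x = 0) /\
      ~ (p = 0 /\ q = 0).
    apply: NNPP => hn; apply: dep => p q Hpq; apply: NNPP => hn2.
    by apply: hn; exists p, q.
  have [rk1 | rk2] : (exists (a : X -> R) (b : Y -> R), forall x y, M x y = a x * b y)
     \/ False; last by [].
    left; case: (eqVneq q 0) => [q0|qn0].
      have p0 : p != 0 by apply/eqP => p0; apply: nz.
      exists a2, b2 => x y; rewrite /M.
      have := Hpq x; rewrite q0 mul0r addr0 => /eqP; rewrite mulf_eq0 (negbTE p0) /=.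
      by move/eqP->; rewrite mul0r add0r.
    exists a1, (fun y => b1 y - p / q * b2 y) => x y; rewrite /M.
    have ax : a2 x = - (p / q) * a1 x.
      have := Hpq x => e; apply: (mulfI qn0).
      have -> : q * a2 x = - (p * a1 x) by apply/eqP; rewrite -addr_eq0 addrC e.
      by field.
    rewrite ax; ring.
  have [a [b HM]] := rk1.
  have [u [z [cu [cz E]]]] := rank1 HM H1 H2.
  exists u, (fun _ => 0), z, (fun _ => 0); split => //; try exact: cone0.
  by move=> x y; rewrite -/(M x y) E mulr0 addr0.
pose I := (option Y * Y)%type.
pose g1 (i : I) := match i.1 with None => b1 i.2
   | Some y0 => if (y0 <= i.2)%O then b1 i.2 - b1 y0 else 0 end.
pose g2 (i : I) := match i.1 with None => b2 i.2
   | Some y0 => if (y0 <= i.2)%O then b2 i.2 - b2 y0 else 0 end.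
have Hgood i : cone (fun x => g1 i * a1 x + g2 i * a2 x).
  case: i => [[y0|] y]; rewrite /g1 /g2 /=.
    case: ifP => le; last first.
      have -> : (fun x => 0 * a1 x + 0 * a2 x) = (fun _ => 0 : R).
        by apply: functional_extensionality => x; rewrite !mul0r addr0.
      exact: cone0.
    have -> : (fun x => (b1 y - b1 y0) * a1 x + (b2 y - b2 y0) * a2 x) =
      (fun x => (a1 x * b1 y + a2 x * b2 y) - (a1 x * b1 y0 + a2 x * b2 y0)).
      by apply: functional_extensionality => x; ring.
    exact: H2.
  have -> : (fun x => b1 y * a1 x + b2 y * a2 x) = (fun x => a1 x * b1 y + a2 x * b2 y).
    by apply: functional_extensionality => x; ring.
  exact: H1.
pose k1 := \sum_x a1 x; pose k2 := \sum_x a2 x.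
have Hpos i : (g1 i != 0) || (g2 i != 0) -> 0 < k1 * g1 i + k2 * g2 i.
  move=> nz.
  have -> : k1 * g1 i + k2 * g2 i = \sum_x (g1 i * a1 x + g2 i * a2 x).
    rewrite big_split /= /k1 /k2 !mulr_suml; congr (_ + _); apply: eq_bigr => x _; ring.
  rewrite lt_def sumr_ge0 ?andbT; last by move=> x _; exact: (Hgood i).1.
  apply/eqP => /eqP; rewrite psumr_eq0; last by move=> x _; exact: (Hgood i).1.
  move/allP => H0.
  have [e1 e2] : g1 i = 0 /\ g2 i = 0.
    apply: indep => x; apply/eqP; rewrite mulrC [g2 i * _]mulrC.
    have := H0 x; rewrite mem_index_enum => /(_ isT).
    by rewrite mulrC [a2 x * _]mulrC.
  by move: nz; rewrite e1 e2 eqxx.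
have [e1 [e2 [f1 [f2 [l1 [l2 [m1 [m2 [He [Hf Hg]]]]]]]]]] := two_d Hpos.
have conev (c1 c2 : R) : ((c1 = 0 /\ c2 = 0) \/ exists i, c1 = g1 i /\ c2 = g2 i) ->
    cone (fun x => c1 * a1 x + c2 * a2 x).
  case=> [[-> ->]|[i [-> ->]]]; last exact: Hgood.
  have -> : (fun x => 0 * a1 x + 0 * a2 x) = (fun _ => 0 : R).
    by apply: functional_extensionality => x; rewrite !mul0r addr0.
  exact: cone0.
have conez (c1 c2 : R) : (forall i, 0 <= c1 * g1 i + c2 * g2 i) ->
    cone (fun y => c1 * b1 y + c2 * b2 y).
  move=> Hc; split; first by move=> y; exact: (Hc (None, y)).
  move=> y y' le; rewrite -subr_ge0.
  have := Hc (Some y, y'); rewrite /g1 /g2 /= le.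
  by have -> : c1 * (b1 y' - b1 y) + c2 * (b2 y' - b2 y) =
     c1 * b1 y' + c2 * b2 y' - (c1 * b1 y + c2 * b2 y) by ring.
exists (fun x => e1 * a1 x + e2 * a2 x), (fun x => f1 * a1 x + f2 * a2 x),
  (fun y => l1 * b1 y + l2 * b2 y), (fun y => m1 * b1 y + m2 * b2 y).
split; [exact: conev | exact: conev | apply: conez => i; exact: (Hg i).1
       | apply: conez => i; exact: (Hg i).2.1 |].
move=> x y; have [_ [_ [E1 E2]]] := Hg (None, y); rewrite /g1 /g2 /= in E1 E2.
transitivity (a1 x * ((l1 * b1 y + l2 * b2 y) * e1 + (m1 * b1 y + m2 * b2 y) * f1) +
              a2 x * ((l1 * b1 y + l2 * b2 y) * e2 + (m1 * b1 y + m2 * b2 y) * f2)).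
  by rewrite -E1 -E2.
ring.
Qed.

Definition j1 : 'I_2 := lift ord0 (ord0 : 'I_1).

Lemma j1_eq (j : 'I_2) : nat_of_ord j <> 0%N -> j1 = j.
Proof. move=> h; apply: val_inj => /=; case: j h => [[|[|m]] hm] //=. Qed.

Definition mk2 (Q : 'I_2 -> Type) (x : Q ord0) (y : Q j1) : forall j, Q j :=
  fun j => match (nat_of_ord j =P 0%N) with
  | ReflectT e => eq_rect ord0 Q x j (@ord_inj 2 ord0 j (esym e))
  | ReflectF ne => eq_rect j1 Q y j (j1_eq ne)
  end.

Lemma eq_rect_id (T : eqType) (Q : T -> Type) (a : T) (x : Q a) (p : a = a) :
  eq_rect a Q x a p = x.
Proof. by rewrite (eq_irrelevance p erefl). Qed.

Lemma mk2_0 Q x y : @mk2 Q x y ord0 = x.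
Proof. by rewrite /mk2; case: eqP => // e; rewrite eq_rect_id. Qed.

Lemma mk2_1 Q x y : @mk2 Q x y j1 = y.
Proof. by rewrite /mk2; case: eqP => // e; rewrite eq_rect_id. Qed.

Lemma ord2_cases (j : 'I_2) : j = ord0 \/ j = j1.
Proof.
case: j => [[|[|m]] hm] //; [left|right]; apply: val_inj => //.
Qed.

Lemma prod2 (R : realType) (F : 'I_2 -> R) : \prod_(j < 2) F j = F ord0 * F j1.
Proof. by rewrite big_ord_recl big_ord1. Qed.

Lemma sum2 (R : realType) (F : 'I_2 -> R) : \sum_(j < 2) F j = F ord0 + F j1.
Proof. by rewrite big_ord_recl big_ord1. Qed.

Theorem lemma11 (R : realType) (k : nat) (d : 'I_k -> Order.disp_t)
    (P : forall j : 'I_k, finPOrderType (d j)) (T : tensor R P) :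
  (forall (r : nat) (Tr : tensor R P),
      minimizer_over (rank_le (P := P) r) T Tr ->
      N_le r Tr ->
      minimizer_over (N_le (P := P) r) T Tr) /\
  (k = 2%N ->
   forall T2 : tensor R P,
      minimizer_over (rank_le (P := P) 2) T T2 ->
      N_fin T2 ->
      minimizer_over (N_le (P := P) 2) T T2).
Proof.
have NR r th : N_le (P := P) r th -> rank_le (P := P) r th.
  by case=> v [_ Hv]; exists r; split => //; exists v.
split.
  move=> r Tr [Hr Hmin] HN; split => // th Hth; apply: Hmin; exact: NR.
move=> Ek; subst k => T2 [Hr Hmin] [r HN].
suff HN2 : N_le (P := P) 2 T2.
  by split => // th /NR; apply: Hmin.
have [a1 [a2 [b1 [b2 Hab]]]] : exists (a1 a2 : P ord0 -> R) (b1 b2 : P j1 -> R),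
    forall i, T2 i = a1 (i ord0) * b1 (i j1) + a2 (i ord0) * b2 (i j1).
  case: Hr => s [hs [w Hw]].
  move: hs w Hw; case: s => [|[|[|s]]] // _ w Hw.
  - exists (fun _ => 0), (fun _ => 0), (fun _ => 0), (fun _ => 0) => i.
    by rewrite Hw big_ord0 !mulr0 addr0.
  - exists (w ord0 ord0), (fun _ => 0), (w ord0 j1), (fun _ => 0) => i.
    by rewrite Hw big_ord1 /outer prod2 mulr0 addr0.
  - exists (w ord0 ord0), (w j1 ord0), (w ord0 j1), (w j1 j1) => i.
    by rewrite Hw sum2 /outer !prod2.
pose mkidx (x : P ord0) (y : P j1) : tidx P := finfun (@mk2 (fun j => P j) x y).
have mkidx0 x y : mkidx x y ord0 = x by rewrite /mkidx ffunE mk2_0.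
have mkidx1 x y : mkidx x y j1 = y by rewrite /mkidx ffunE mk2_1.
case: HN => v [Hc Hv].
have HM x y : a1 x * b1 y + a2 x * b2 y = \sum_(l < r) v l ord0 x * v l j1 y.
  by have := Hab (mkidx x y); rewrite mkidx0 mkidx1 => <-; rewrite Hv /outer; apply: eq_bigr => l _;
     rewrite prod2 mkidx0 mkidx1.
have H1 y : cone (fun x => a1 x * b1 y + a2 x * b2 y).
  split.
    move=> x; rewrite HM; apply: sumr_ge0 => l _.
    by apply: mulr_ge0; [exact: (Hc l ord0).1 | exact: (Hc l j1).1].
  move=> x x' le; rewrite !HM; apply: ler_sum => l _.
  by apply: ler_wpM2r; [exact: (Hc l j1).1 | exact: (Hc l ord0).2].
have H2 y y' : (y <= y')%O ->
    cone (fun x => (a1 x * b1 y' + a2 x * b2 y') - (a1 x * b1 y + a2 x * b2 y)).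
  move=> le.
  have E x : (a1 x * b1 y' + a2 x * b2 y') - (a1 x * b1 y + a2 x * b2 y) =
      \sum_(l < r) v l ord0 x * (v l j1 y' - v l j1 y).
    by rewrite !HM -sumrB; apply: eq_bigr => l _; rewrite mulrBr.
  have dge l : 0 <= v l j1 y' - v l j1 y by rewrite subr_ge0; exact: (Hc l j1).2.
  split.
    move=> x; rewrite E; apply: sumr_ge0 => l _.
    by apply: mulr_ge0; [exact: (Hc l ord0).1 | exact: dge].
  move=> x x' lex; rewrite !E; apply: ler_sum => l _.
  by apply: ler_wpM2r; [exact: dge | exact: (Hc l ord0).2].
have [u1 [u2 [z1 [z2 [cu1 cu2 cz1 cz2 E]]]]] := core2 H1 H2.
exists (fun l : 'I_2 => if l == ord0 then @mk2 (fun j => P j -> R) u1 z1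
                        else @mk2 (fun j => P j -> R) u2 z2).
split.
  move=> l j; case: (l == ord0); case: (ord2_cases j) => ->;
    rewrite ?mk2_0 ?mk2_1 //.
move=> i; rewrite Hab sum2 /outer !prod2 /= !mk2_0 !mk2_1; exact: E.
Qed.
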